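(* Let $W$ be a non-trivial cyclically reduced word over $Y_C\cup Y_C^{-1}$ which represents the identity in the group $Q_C=\langle Y_C\mid \mathcal{S}_C\rangle$. Then some non-trivial subword of some cyclic permutation of $W$ is a cyclic permutation of (a reduced word representing) an element of the normal closure $\langle\langle \mathcal{S}_C\rangle\rangle^F$ of $\mathcal{S}_C$ in $F$. In particular, $\|W\|\ge C$.
   Context: Let $Q$ be a finitely generated recursively presented group with presentation $\langle Y\mid\mathcal{S}\rangle$, where $Y=\{y_1,\dots,y_m\}$ is finite, $\mathcal{S}$ is a recursive set of positive words over $Y$ (words using only letters of $Y$, not $Y^{-1}$), and the empty word is not in $\mathcal{S}$. Let $C\ge1$ be an integer. For $i=1,\dots,m$ let $Y_{C,i}=\{a_{1,i},\dots,a_{C,i}\}$, $Y_C=\bigcup_iY_{C,i}$ (all letters distinct), $A_i=a_{1,i}\cdots a_{C,i}$, $\mathcal{D}=\{A_1,\dots,A_m\}$, and $F=\langle\mathcal{D}\rangle\le F(Y_C)$ (free with basis $\mathcal{D}$). For $r=r(y_1,\dots,y_m)\in\mathcal{S}$ let $r_C=r(A_1,\dots,A_m)$ and $\mathcal{S}_C=\{r_C:r\in\mathcal{S}\}$. $\|W\|$ is the number of letters of $W$. *)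

(* Defs.v *)
From mathcomp Require Import all_boot.
Set Implicit Arguments. Unset Strict Implicit. Unset Printing Implicit Defensive.

(* Words over X ∪ X^{-1}: a letter is (x, b) with b = true for x, b = false for x^{-1}. *)
Definition word (T : Type) := seq (T * bool).

Definition inv_letter {T : Type} (x : T * bool) : T * bool := (x.1, ~~ x.2).
Definition inv_word {T : Type} (w : word T) : word T := rev (map inv_letter w).

Definition freduce {T : eqType} (w : word T) : word T :=
  foldr (fun x acc => match acc with
                      | y :: t => if y == inv_letter x then t else x :: acc
                      | [::] => [:: x] end) [::] w.

Fixpoint reducedb {T : eqType} (w : word T) : bool :=
  match w with
  | x :: ((y :: _) as t) => (y != inv_letter x) && reducedb t
  | _ => true
  end.

Definition cyc_reduced {T : eqType} (w : word T) : bool :=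
  reducedb w && (if w is x :: t then last x t != inv_letter x else true).

(* w (read as an element of the free group F(T)) lies in the normal closure, inside
   the subgroup whose elements are represented by the words satisfying [Conj], of the
   set of words satisfying [Rel]: w is freely equal to a product of conjugates
   u r^{±1} u^{-1} with Conj u and Rel r. *)
Definition in_nclosure {T : eqType} (Conj Rel : word T -> Prop) (w : word T) : Prop :=
  exists l : seq (word T * word T * bool),
    (forall p, p \in l -> Conj p.1.1 /\ Rel p.1.2) /\
    freduce w = freduce (flatten [seq u ++ (if e then r else inv_word r) ++ inv_word u
                                 | '(u, r, e) <- l]).

(* Y_C = {a_{j,i} : j < C, i < m}; letter a_{j+1,i+1} is (j, i). *)
Definition YC (C m : nat) := ('I_C * 'I_m)%type.

Definition Aword (C m : nat) (i : 'I_m) : word (YC C m) :=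
  [seq ((j, i), true) | j <- enum 'I_C].

(* r_C = r(A_1, ..., A_m) for a positive word r over Y *)
Definition relC (C m : nat) (r : seq 'I_m) : word (YC C m) :=
  flatten [seq Aword C i | i <- r].

(* word over D ∪ D^{-1} expanded as a word over Y_C: these represent the elements of F *)
Definition FwordC (C m : nat) (f : word 'I_m) : word (YC C m) :=
  flatten [seq if e then Aword C i else inv_word (Aword C i) | '(i, e) <- f].

Definition inF (C m : nat) (u : word (YC C m)) : Prop :=
  exists f : word 'I_m, u = FwordC C f.

Definition in_SC (C m : nat) (S : pred (seq 'I_m)) (w : word (YC C m)) : Prop :=
  exists r, S r /\ w = relC C r.
Arguments in_SC C m S w : clear implicits.
Arguments inF C m u : clear implicits.

(* Main.v *)
Require Import Defs.
From mathcomp Require Import all_boot.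
From mathcomp Require Import zify.
From Stdlib Require Import Classical ClassicalEpsilon FunctionalExtensionality PropExtensionality.
Set Implicit Arguments. Unset Strict Implicit. Unset Printing Implicit Defensive.
Section FreeRed.
Variable T : eqType.
Implicit Types (x y : T * bool) (u v w : word T).

Definition fstep x (acc : word T) : word T :=
  match acc with y :: t => if y == inv_letter x then t else x :: acc | [::] => [:: x] end.

Lemma freduce_cons x w : freduce (x :: w) = fstep x (freduce w).
Proof. by []. Qed.

Lemma inv_letterK x : inv_letter (inv_letter x) = x.
Proof. by case: x => a b; rewrite /inv_letter /= negbK. Qed.

Lemma inv_letter_neq x : (inv_letter x == x) = false.
Proof. by case: x => a b; rewrite /inv_letter /= xpair_eqE eqxx /=; case: b. Qed.

Lemma inv_letter_inj : injective (@inv_letter T).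
Proof. by move=> x y H; rewrite -(inv_letterK x) H inv_letterK. Qed.

Lemma inv_wordK : cancel (@inv_word T) (@inv_word T).
Proof. by move=> w; rewrite /inv_word map_rev revK -map_comp (eq_map inv_letterK) map_id. Qed.

Lemma inv_word_cat u v : inv_word (u ++ v) = inv_word v ++ inv_word u.
Proof. by rewrite /inv_word map_cat rev_cat. Qed.

Lemma inv_word_cons x u : inv_word (x :: u) = rcons (inv_word u) (inv_letter x).
Proof. by rewrite /inv_word /= rev_cons. Qed.

Lemma inv_word_nil : inv_word [::] = [::] :> word T.
Proof. by []. Qed.

Lemma size_inv_word u : size (inv_word u) = size u.
Proof. by rewrite /inv_word size_rev size_map. Qed.

Lemma fstep_red x acc : reducedb acc -> reducedb (fstep x acc).
Proof.
case: acc => [|y t] //= H.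
case: ifP => [_|/negbT ne]; first by case: t H => //= z t /andP[].
by rewrite [reducedb (x :: _)]/= ne H.
Qed.

Lemma fstep_cancel x acc : reducedb acc -> fstep x (fstep (inv_letter x) acc) = acc.
Proof.
case: acc => [|y t] H; rewrite /fstep; first by rewrite eqxx.
rewrite inv_letterK; move: H; case: eqP => [->|ne] H.
  case: t H => [|z t] /=; first by [].
  by case/andP => /negbTE ->.
by rewrite eqxx.
Qed.

Lemma freduce_red w : reducedb (freduce w).
Proof. by elim: w => //= x w IH; apply: fstep_red. Qed.

Lemma freduce_id w : reducedb w -> freduce w = w.
Proof.
elim: w => // x w IH H; rewrite freduce_cons IH; last by case: w H {IH} => //= y t /andP[].
case: w H {IH} => //= y t /andP[H _]; case: ifP => // /eqP E.
by move: H; rewrite E eqxx.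
Qed.

Definition redon acc u := foldr fstep acc u.

Lemma redon_fstep acc x w : reducedb acc -> reducedb w ->
  redon acc (fstep x w) = fstep x (redon acc w).
Proof.
move=> Ha; case: w => [|y t] //= Hw; case: ifP => // /eqP E.
have Hr : reducedb (redon acc t).
  by elim: t {Hw} => //= z t IH; apply: fstep_red.
by rewrite E fstep_cancel.
Qed.

Lemma redon_freduce acc u : reducedb acc -> redon acc u = redon acc (freduce u).
Proof.
move=> Ha; elim: u => //= x u IH.
by rewrite IH redon_fstep // freduce_red.
Qed.

Lemma freduce_catE u v : freduce (u ++ v) = redon (freduce v) u.
Proof. by rewrite /freduce foldr_cat. Qed.

Lemma freduce_cat u v : freduce (u ++ v) = freduce (freduce u ++ freduce v).
Proof.
rewrite !freduce_catE (redon_freduce _ (freduce_red v)).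
by rewrite (freduce_id (freduce_red v)).
Qed.

Lemma freduce_idem w : freduce (freduce w) = freduce w.
Proof. exact: freduce_id (freduce_red w). Qed.

Lemma fe_cat u u' v v' : freduce u = freduce u' -> freduce v = freduce v' ->
  freduce (u ++ v) = freduce (u' ++ v').
Proof. by move=> H1 H2; rewrite freduce_cat H1 H2 -freduce_cat. Qed.

Lemma freduce_rinv u : freduce (u ++ inv_word u) = [::].
Proof.
elim: u => // x u IH.
rewrite inv_word_cons -cats1 cat_cons catA freduce_cons freduce_cat IH /=.
by rewrite eqxx.
Qed.

Lemma freduce_linv u : freduce (inv_word u ++ u) = [::].
Proof. by rewrite -{2}(inv_wordK u) freduce_rinv. Qed.

Lemma fe_inv u v : freduce u = freduce v -> freduce (inv_word u) = freduce (inv_word v).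
Proof.
move=> H.
have E1 : freduce (inv_word u) = freduce (inv_word u ++ v ++ inv_word v).
  by rewrite [RHS]freduce_cat freduce_rinv cats0 freduce_idem.
rewrite E1 catA (freduce_cat (inv_word u ++ v)).
have E2 : freduce (inv_word u ++ v) = [::].
  by rewrite freduce_cat -H -freduce_cat freduce_linv.
by rewrite E2 /= freduce_idem.
Qed.

Lemma fe_linvl z w : freduce (inv_word z ++ z ++ w) = freduce w.
Proof. by rewrite catA freduce_cat freduce_linv /= freduce_idem. Qed.
Lemma fe_rinvl z w : freduce (z ++ inv_word z ++ w) = freduce w.
Proof. by rewrite catA freduce_cat freduce_rinv /= freduce_idem. Qed.
Lemma fe_linvr z w : freduce (w ++ inv_word z ++ z) = freduce w.
Proof. by rewrite freduce_cat freduce_linv cats0 freduce_idem. Qed.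
Lemma fe_rinvr z w : freduce (w ++ z ++ inv_word z) = freduce w.
Proof. by rewrite freduce_cat freduce_rinv cats0 freduce_idem. Qed.

Definition rr x y := y != inv_letter x.

Lemma reducedE x t : reducedb (x :: t) = path rr x t.
Proof. by elim: t x => //= y t IH x; rewrite IH. Qed.

Lemma reduced_cat u v : reducedb (u ++ v) -> reducedb u /\ reducedb v.
Proof.
case: u => [|x u] H; first by [].
move: H; rewrite cat_cons reducedE cat_path.
case/andP => H1 H2; split; first by rewrite reducedE.
case: v H2 => [|y v] // /andP[_ H]; by rewrite reducedE.
Qed.

Lemma reduced_infix (p0 p p1 : word T) : reducedb (p0 ++ p ++ p1) -> reducedb p.
Proof. by case/reduced_cat => _ /reduced_cat []. Qed.

Lemma cyc_rot (p1 p2 : word T) : cyc_reduced (p1 ++ p2) -> reducedb (p2 ++ p1).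
Proof.
case: p1 => [|x p1]; first by rewrite cats0 => /andP[].
case: p2 => [|y p2]; first by rewrite cats0 => /andP[].
rewrite /cyc_reduced -/(reducedb (x :: p1 ++ y :: p2)) reducedE cat_path /=.
case/andP => /and3P[H1 H2 H3] H4.
rewrite -/(reducedb (y :: p2 ++ x :: p1)) reducedE cat_path /= H3 /=.
rewrite last_cat /= in H4.
rewrite /rr in H2 *; rewrite H1 andbT.
by apply: contra H4 => /eqP ->; rewrite inv_letterK.
Qed.

End FreeRed.

Section Main.
Variables (C m : nat) (S : pred (seq 'I_m)).
Hypothesis C_gt0 : (0 < C)%N.

Local Notation Wd := (word (YC C m)).
Local Notation Dw := (word 'I_m).

Definition prodc (l : seq (Wd * Wd * bool)) : Wd :=
  flatten [seq u ++ (if e then r else inv_word r) ++ inv_word u | '(u, r, e) <- l].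

Definition Nset (w : Wd) := in_nclosure (inF C m) (in_SC C m S) w.

Lemma prodc_cons u r e l : prodc ((u, r, e) :: l) = (u ++ (if e then r else inv_word r) ++ inv_word u) ++ prodc l.
Proof. by []. Qed.

Lemma prodc_cat l1 l2 : prodc (l1 ++ l2) = prodc l1 ++ prodc l2.
Proof. by rewrite /prodc map_cat flatten_cat. Qed.

Lemma N_fe w w' : freduce w = freduce w' -> Nset w -> Nset w'.
Proof. by move=> E [l [H1 H2]]; exists l; split => //; rewrite -E. Qed.

Lemma N_nil : Nset [::].
Proof. by exists [::]. Qed.

Lemma N_cat u v : Nset u -> Nset v -> Nset (u ++ v).
Proof.
move=> [l1 [H1 E1]] [l2 [H2 E2]]; exists (l1 ++ l2); split.
  by move=> p; rewrite mem_cat => /orP[/H1|/H2].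
by rewrite map_cat flatten_cat; apply: fe_cat.
Qed.

Lemma FwordC_cat (f g : Dw) : FwordC C (f ++ g) = FwordC C f ++ FwordC C g.
Proof. by rewrite /FwordC map_cat flatten_cat. Qed.

Lemma FwordC_inv (f : Dw) : FwordC C (inv_word f) = inv_word (FwordC C f).
Proof.
elim: f => // -[i e] f IH.
rewrite inv_word_cons -cats1 FwordC_cat IH.
rewrite [FwordC C (_ :: _)]/FwordC /= -/(FwordC C f) inv_word_cat /FwordC /= cats0.
by case: e => //=; rewrite inv_wordK.
Qed.

Lemma N_inv u : Nset u -> Nset (inv_word u).
Proof.
move=> [l [H1 E1]].
exists (rev [seq (p.1.1, p.1.2, ~~ p.2) | p <- l]); split.
  by move=> p; rewrite mem_rev => /mapP[q /H1 Hq ->].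
have K : prodc (rev [seq (p.1.1, p.1.2, ~~ p.2) | p <- l]) = inv_word (prodc l).
  elim: l {H1 E1} => // -[[u' r] e] l IH.
  have P0 : prodc [::] = [::] by [].
  rewrite map_cons rev_cons -cats1 prodc_cat IH prodc_cons P0 cats0 prodc_cons inv_word_cat.
  rewrite !inv_word_cat inv_wordK !catA /=.
  by case: e => /=; rewrite ?inv_wordK.
rewrite /prodc in K; rewrite K.
exact: fe_inv.
Qed.

Lemma fe_ins (x y z : Wd) : freduce (x ++ y) = freduce (x ++ (inv_word z ++ z) ++ y).
Proof.
rewrite [RHS]freduce_cat [freduce ((_ ++ _) ++ _)]freduce_cat freduce_linv /=.
by rewrite freduce_idem -freduce_cat.
Qed.

Lemma N_conj (f : Dw) w : Nset w -> Nset (FwordC C f ++ w ++ inv_word (FwordC C f)).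
Proof.
move=> [l [H1 E1]]; set z := FwordC C f.
exists [seq (z ++ p.1.1, p.1.2, p.2) | p <- l]; split.
  move=> p /mapP[q /H1 [[g Hg] Hq] ->] /=; split => //.
  by exists (f ++ g); rewrite FwordC_cat Hg.
rewrite (@fe_cat _ z z (w ++ inv_word z) (prodc l ++ inv_word z)) //; last first.
  by apply: fe_cat.
elim: l {H1 E1} => [|[[u r] e] l IH] /=.
  by rewrite freduce_rinv.
rewrite -/(prodc _) -/(prodc _) in IH *.
rewrite inv_word_cat.
set X := u ++ (if e then r else inv_word r) ++ inv_word u.
have -> : z ++ (X ++ prodc l) ++ inv_word z = (z ++ X) ++ (prodc l ++ inv_word z) by rewrite !catA.
rewrite (fe_ins _ _ z).
have -> : (z ++ X) ++ (inv_word z ++ z) ++ prodc l ++ inv_word z =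
   (z ++ X ++ inv_word z) ++ (z ++ prodc l ++ inv_word z) by rewrite !catA.
apply: fe_cat => //.
by rewrite /X !catA.
Qed.


Definition Tr (d : Dw) := Nset (FwordC C d).
Definition Rel (d d' : Dw) := Nset (inv_word (FwordC C d) ++ FwordC C d').

Lemma Rel_refl d : Rel d d.
Proof. by apply: (N_fe _ N_nil); rewrite freduce_linv. Qed.

Lemma Rel_sym d d' : Rel d d' -> Rel d' d.
Proof. by move/N_inv; rewrite /Rel inv_word_cat inv_wordK. Qed.

Lemma Rel_trans d1 d2 d3 : Rel d1 d2 -> Rel d2 d3 -> Rel d1 d3.
Proof.
move=> H1 H2; apply: N_fe (N_cat H1 H2).
by rewrite [RHS](fe_ins _ _ (inv_word (FwordC C d2))) inv_wordK !catA.
Qed.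

Lemma Rel_catr d d' e : Rel d d' -> Rel (d ++ e) (d' ++ e).
Proof.
move=> H; have := N_conj (inv_word e) H.
rewrite /Rel !FwordC_cat FwordC_inv inv_wordK inv_word_cat.
by rewrite !catA.
Qed.

Lemma Rel_nil d : Rel d [::] <-> Tr d.
Proof.
rewrite /Rel /Tr /= cats0; split => H.
  by have := N_inv H; rewrite inv_wordK.
exact: N_inv.
Qed.

Lemma Tr_conj e d : Tr d -> Tr (e ++ d ++ inv_word e).
Proof.
move=> H; have := N_conj e H.
by rewrite /Tr !FwordC_cat FwordC_inv.
Qed.

Lemma Tr_conj' e d : Tr (e ++ d ++ inv_word e) -> Tr d.
Proof.
move=> H; have := N_conj (inv_word e) H.
rewrite /Tr !FwordC_cat !FwordC_inv inv_wordK => H'.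
apply: N_fe H'.
by rewrite -!catA fe_linvl fe_linvr.
Qed.

Lemma Tr_rot d1 d2 : Tr (d1 ++ d2) -> Tr (d2 ++ d1).
Proof.
move=> H; have := N_conj (inv_word d1) H.
rewrite /Tr !FwordC_cat !FwordC_inv inv_wordK => H'.
apply: N_fe H'.
by rewrite -!catA fe_linvl.
Qed.

Definition cls (d : Dw) : Dw -> Prop := Rel d.

Lemma cls_eq d d' : cls d = cls d' <-> Rel d d'.
Proof.
split=> [H|H].
  by have := equal_f H d'; rewrite /cls => ->; apply: Rel_refl.
apply: functional_extensionality => q; apply: propositional_extensionality.
rewrite /cls; split => Hq; first exact: Rel_trans (Rel_sym H) Hq.
exact: Rel_trans H Hq.
Qed.

Lemma cls_nil d : cls d = cls [::] <-> Tr d.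
Proof. by rewrite cls_eq Rel_nil. Qed.

Lemma cls_catr d d' e : cls d = cls d' -> cls (d ++ e) = cls (d' ++ e).
Proof. by move=> /cls_eq H; apply/cls_eq/Rel_catr. Qed.

Local Notation Lt := ((YC C m) * bool)%type.
Definition V := (nat * nat)%type.
Definition v0 : V := (0, 0).
Definition vtx (s : nat) (i : 'I_m) : V := if (s == 0) || (s == C) then v0 else (s, val i).
Definition src (x : Lt) : V := if x.2 then vtx x.1.1 x.1.2 else vtx x.1.1.+1 x.1.2.
Definition tgt (x : Lt) : V := if x.2 then vtx x.1.1.+1 x.1.2 else vtx x.1.1 x.1.2.
Definition dl (x : Lt) : Dw := if x.1.1.+1 == C then [:: (x.1.2, x.2)] else [::].
Definition ds (p : Wd) : Dw := flatten (map dl p).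
Fixpoint pathfrom (a : V) (p : Wd) (b : V) : bool :=
  match p with [::] => a == b | x :: p' => (src x == a) && pathfrom (tgt x) p' b end.
Definition tau (v : V) : Wd := oapp (fun i : 'I_m => take v.1 (Aword C i)) [::] (insub v.2).
Definition endv (a : V) (p : Wd) := last a (map tgt p).

Lemma ds_cat p q : ds (p ++ q) = ds p ++ ds q.
Proof. by rewrite /ds map_cat flatten_cat. Qed.

Lemma ds_cons x p : ds (x :: p) = dl x ++ ds p.
Proof. by []. Qed.

Lemma src_inv x : src (inv_letter x) = tgt x.
Proof. by case: x => [[j i] []]. Qed.
Lemma tgt_inv x : tgt (inv_letter x) = src x.
Proof. by case: x => [[j i] []]. Qed.
Lemma dl_inv x : dl (inv_letter x) = inv_word (dl x).
Proof. by case: x => [[j i] b]; rewrite /dl /=; case: ifP. Qed.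

Lemma pathfrom_cat a p q b :
  pathfrom a (p ++ q) b = pathfrom a p (endv a p) && pathfrom (endv a p) q b.
Proof.
elim: p a => [|x p IH] a /=; first by rewrite eqxx.
by rewrite IH /endv /= andbA.
Qed.

Lemma pathfrom_end a p b : pathfrom a p b -> b = endv a p.
Proof. by elim: p a => [|x p IH] a /=; [move/eqP | case/andP => _ /IH]. Qed.

Lemma pathfrom_catI a p c q b : pathfrom a p c -> pathfrom c q b -> pathfrom a (p ++ q) b.
Proof. by move=> H1 H2; rewrite pathfrom_cat -(pathfrom_end H1) H1. Qed.

Lemma pathfrom_catE a p q b : pathfrom a (p ++ q) b ->
  exists c, pathfrom a p c /\ pathfrom c q b.
Proof. by rewrite pathfrom_cat => /andP[H1 H2]; exists (endv a p). Qed.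

Lemma tau_vtx s i : s < C -> tau (vtx s i) = take s (Aword C i).
Proof.
move=> sC; rewrite /vtx /tau; case: (s =P 0) => [->|s0] /=.
  by rewrite take0; move: (insub 0) => o; case: o => [o|] /=; rewrite ?take0.
by rewrite (ltn_eqF sC) /= valK /=.
Qed.

Lemma tau_v0 : tau v0 = [::].
Proof. by rewrite /tau /=; move: (insub 0) => o; case: o => [o|] /=; rewrite ?take0. Qed.

Lemma vtxC i : vtx C i = v0.
Proof. by rewrite /vtx eqxx orbT. Qed.

Lemma size_Aword (i : 'I_m) : size (Aword C i) = C.
Proof. by rewrite /Aword size_map size_enum_ord. Qed.

Lemma nth_Aword x0 (i : 'I_m) (j : 'I_C) : nth x0 (Aword C i) j = ((j, i), true).
Proof. by rewrite /Aword (nth_map j) ?size_enum_ord // nth_ord_enum. Qed.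

Lemma take_Aword (i : 'I_m) (j : 'I_C) : take j.+1 (Aword C i) = rcons (take j (Aword C i)) ((j, i), true).
Proof. by rewrite (take_nth ((j,i),true)) ?size_Aword // nth_Aword. Qed.

Lemma FwordC1 (i : 'I_m) e : FwordC C [:: (i, e)] = if e then Aword C i else inv_word (Aword C i).
Proof. by rewrite /FwordC /= cats0. Qed.

Lemma tele1 x : freduce (tau (src x) ++ [:: x] ++ inv_word (tau (tgt x))) = freduce (FwordC C (dl x)).
Proof.
case: x => [[j i] b]; rewrite /src /tgt /dl /=.
have jC := ltn_ord j.
have [lt|eq] : j.+1 < C \/ j.+1 = C.
  by case: (ltngtP j.+1 C) => [lt|gt|eq]; [left|move: gt; rewrite ltnS leqNgt jC|right].
  rewrite (ltn_eqF lt).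
  case: b; rewrite !tau_vtx // ?take_Aword -?cats1 /=.
    by rewrite -cat1s catA freduce_rinv.
  have -> : ((j,i),false) :: inv_word (take j (Aword C i)) = inv_word (take j (Aword C i) ++ [:: ((j,i),true)]).
    by rewrite inv_word_cat.
  by rewrite freduce_rinv.
rewrite eq eqxx FwordC1.
have HA : take j.+1 (Aword C i) = Aword C i by rewrite take_oversize // size_Aword eq.
case: b; rewrite vtxC tau_v0 tau_vtx //.
  by rewrite inv_word_nil cats1 -take_Aword HA.
rewrite cat0s.
have -> : ((j,i),false) :: inv_word (take j (Aword C i)) = inv_word (take j (Aword C i) ++ [:: ((j,i),true)]).
  by rewrite inv_word_cat.
by rewrite cats1 -take_Aword HA.
Qed.

Lemma tele a p b : pathfrom a p b ->
  freduce (tau a ++ p ++ inv_word (tau b)) = freduce (FwordC C (ds p)).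
Proof.
elim: p a => [|x p IH] a /=.
  by move/eqP => <-; rewrite freduce_rinv.
case/andP => /eqP <- /IH H.
rewrite ds_cons FwordC_cat -(fe_cat (tele1 x) H).
have -> : tau (src x) ++ (x :: p) ++ inv_word (tau b) = (tau (src x) ++ [:: x]) ++ (p ++ inv_word (tau b)).
  by rewrite -cat1s !catA.
rewrite (fe_ins _ _ (tau (tgt x))).
by rewrite !catA.
Qed.

Lemma Aword_path_gen (i : 'I_m) (s : seq 'I_C) n : map val s = iota n (size s) ->
  pathfrom (vtx n i) [seq ((j, i), true) | j <- s] (vtx (n + size s) i).
Proof.
elim: s n => [|j s IH] n /=; first by rewrite addn0.
case=> E1 E2; rewrite /src /tgt /= E1 eqxx /= addnS -addSn.
exact: IH.
Qed.

Lemma Aword_path (i : 'I_m) : pathfrom v0 (Aword C i) v0.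
Proof.
have := @Aword_path_gen i (enum 'I_C) 0.
rewrite size_enum_ord val_enum_ord add0n vtxC => H.
have -> : v0 = vtx 0 i by [].
exact: H.
Qed.

Lemma relC_path (r : seq 'I_m) : pathfrom v0 (relC C r) v0.
Proof.
elim: r => [|i r IH] //=.
exact: pathfrom_catI (Aword_path i) IH.
Qed.


Lemma Rel_catl d e e' : Rel e e' -> Rel (d ++ e) (d ++ e').
Proof.
move=> H; apply: N_fe H.
by rewrite !FwordC_cat inv_word_cat -!catA [RHS]freduce_cat fe_linvl -freduce_cat.
Qed.

Lemma cls_catl d e e' : cls e = cls e' -> cls (d ++ e) = cls (d ++ e').
Proof. by move=> /cls_eq H; apply/cls_eq/Rel_catl. Qed.

Lemma N_rel r : S r -> Nset (relC C r).
Proof.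
move=> Sr; exists [:: ([::], relC C r, true)]; split.
  move=> p; rewrite inE => /eqP -> /=; split; first by exists [::].
  by exists r.
by rewrite -[RHS]/(freduce (([::] ++ (relC C r ++ inv_word [::])) ++ [::])) cat0s inv_word_nil !cats0.
Qed.

Definition comp := (V * (Dw -> Prop) * V)%type.
Definition triv (c : Dw -> Prop) : bool :=
  if excluded_middle_informative (c = cls [::]) then true else false.
Definition mulc (c : Dw -> Prop) (e : Dw) : Dw -> Prop :=
  fun q => exists d, c = cls d /\ Rel (d ++ e) q.
Definition norm (u : V) (c : Dw -> Prop) (w : V) (L : seq comp) : seq comp :=
  if (u == w) && triv c then L else (u, c, w) :: L.
Definition mulw (L : seq comp) (a : V) (e : Dw) (b : V) : seq comp :=
  if L is (u, c, w) :: L' then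
    (if w == a then norm u (mulc c e) b L' else norm a (cls e) b L)
  else norm a (cls e) b [::].
Definition step (L : seq comp) (x : Lt) := mulw L (src x) (dl x) (tgt x).
Definition act (w : Wd) (L : seq comp) := foldl step L w.

Fixpoint valid (L : seq comp) : Prop :=
  match L with
  | [::] => True
  | (u, c, w) :: L' => [/\ exists d, c = cls d, ~~ ((u == w) && triv c),
                         (if L' is (_, _, w1) :: _ then w1 != u else True) & valid L']
  end.

Lemma trivP c : triv c = true <-> c = cls [::].
Proof. by rewrite /triv; case: excluded_middle_informative. Qed.

Lemma trivN c : triv c = false -> c <> cls [::].
Proof. by rewrite /triv; case: excluded_middle_informative. Qed.

Lemma mulc_cls d e : mulc (cls d) e = cls (d ++ e).
Proof.
apply: functional_extensionality => q; apply: propositional_extensionality.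
split => [[d' [/cls_eq E H]]|H]; last by exists d.
exact: Rel_trans (Rel_catr e E) H.
Qed.

Lemma mulw_valid L a e b : valid L -> valid (mulw L a e b).
Proof.
case: L => [|[[u c] w] L'] /=.
  by rewrite /norm; case: ifP => // H _; split; [by exists e | by rewrite H | done | done].
case=> [[d Ed] Hn Ha Hv]; case: eqP => [Ewa|Nwa]; rewrite /norm; case: ifP => // H.
  by split; [exists (d ++ e); rewrite Ed mulc_cls | rewrite H | done | done].
  by split => //; exists d.
by split; [exists e | rewrite H | apply/eqP | split => //; exists d].
Qed.

Lemma mulw_mulw L a e b e' b' : valid L ->
  mulw (mulw L a e b) b e' b' = mulw L a (e ++ e') b'.
Proof.
case: L => [|[[u c] w] L'] /=.
  rewrite /norm; case: ifP => [/andP[/eqP <- /trivP E]|_] _ /=.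
    by rewrite (cls_catr e' E).
  by rewrite eqxx mulc_cls.
case=> [[d Ed] Hn Ha Hv]; case: eqP => [Ewa|Nwa].
  rewrite {1}/norm; case: ifP => [/andP[/eqP Eub /trivP E]|_] /=; last first.
    by rewrite eqxx Ed !mulc_cls catA.
  move: E; rewrite Ed mulc_cls => E; rewrite mulc_cls catA (cls_catr e' E) /=.
  by case: L' Ha Hv => [|[[u1 c1] w1] L''] /=; rewrite ?Eub // => /negbTE ->.
rewrite {1}/norm; case: ifP => [/andP[/eqP Eab /trivP E]|_] /=; last first.
  by rewrite eqxx mulc_cls.
rewrite -Eab (cls_catr e' E) /=.
by case: eqP.
Qed.

Lemma mulw_triv L a e : valid L -> cls e = cls [::] -> mulw L a e a = L.
Proof.
case: L => [|[[u c] w] L'] /=.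
  by rewrite /norm eqxx => _ E; rewrite (proj2 (trivP _) E).
case=> [[d Ed] Hn Ha Hv] E; case: eqP => [Ewa|Nwa].
  rewrite Ed mulc_cls (cls_catl d E) cats0 -Ed /norm -Ewa.
  by rewrite (negbTE Hn).
by rewrite /norm eqxx (proj2 (trivP _) E).
Qed.

Lemma step_valid L x : valid L -> valid (step L x).
Proof. exact: mulw_valid. Qed.

Lemma step_inv L x : valid L -> step (step L x) (inv_letter x) = L.
Proof.
move=> HL; rewrite /step src_inv tgt_inv dl_inv mulw_mulw //.
apply: mulw_triv => //; apply/cls_nil.
apply: N_fe N_nil; rewrite /Tr FwordC_cat FwordC_inv.
by rewrite freduce_rinv.
Qed.

Lemma act_cat u v L : act (u ++ v) L = act v (act u L).
Proof. exact: foldl_cat. Qed.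

Lemma act_valid w L : valid L -> valid (act w L).
Proof. by elim: w L => //= x w IH L H; apply/IH/step_valid. Qed.

Lemma act_inv u L : valid L -> act (inv_word u) (act u L) = L.
Proof.
elim: u L => //= x u IH L H.
rewrite inv_word_cons -cats1 act_cat IH; last exact: step_valid.
by rewrite /= step_inv.
Qed.

Lemma act_freduce w L : valid L -> act (freduce w) L = act w L.
Proof.
elim: w L => //= x w IH L H.
rewrite -(IH _ (step_valid x H)).
have Hf := freduce_red w.
case: (freduce w) Hf => [|y t] //= Hf.
case: eqP => [Ey|] //.
by rewrite Ey step_inv.
Qed.

Lemma act_path a p b L : valid L -> pathfrom a p b -> act p L = mulw L a (ds p) b.
Proof.
elim: p a L => [|x p IH] a L /= HL.
  move/eqP => <-; rewrite mulw_triv //.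
case/andP => /eqP Ex Hp.
rewrite (IH _ _ (step_valid x HL) Hp) /step Ex mulw_mulw //.
Qed.

Lemma act_rel r L : valid L -> S r -> act (relC C r) L = L.
Proof.
move=> HL Sr; rewrite (act_path HL (relC_path r)) mulw_triv //.
apply/cls_nil; apply: N_fe (N_rel Sr).
by rewrite -(tele (relC_path r)) tau_v0 cats0.
Qed.

Lemma act_prod l L : valid L -> (forall p, p \in l -> in_SC C m S p.1.2) ->
  act (prodc l) L = L.
Proof.
elim: l L => [|[[u r] e] l IH] L HL Hl //=.
rewrite -/(prodc l) act_cat IH; last 2 first.
- exact: act_valid.
- by move=> p Hp; apply: Hl; rewrite inE Hp orbT.
have [r0 [Sr0 ->]] : in_SC C m S r by apply: (Hl (u, r, e)); rewrite inE eqxx.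
rewrite !act_cat.
have Hu := act_valid u HL.
clear Hl IH; case: e; first by rewrite act_rel // act_inv.
by rewrite -{1}(act_rel Hu Sr0) act_inv // act_inv.
Qed.

Lemma act_W W : in_nclosure (fun _ => True) (in_SC C m S) W -> act W [::] = [::].
Proof.
move=> [l [Hl E]].
rewrite -act_freduce // E act_freduce //.
by apply: act_prod => // p /Hl [].
Qed.


Definition bad (w : Wd) := exists p0 p p1 a,
  [/\ w = p0 ++ p ++ p1, p != [::], pathfrom a p a & Tr (ds p)].

Lemma bad_rcons w x : bad w -> bad (rcons w x).
Proof.
case=> p0 [p [p1 [a [E H1 H2 H3]]]].
by exists p0, p, (rcons p1 x), a; split => //; rewrite E -!cats1 !catA.
Qed.

Lemma ds1 x : ds [:: x] = dl x.
Proof. by rewrite /ds /= cats0. Qed.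

Lemma norm_letter w x L : ~ bad (rcons w x) ->
  norm (src x) (cls (dl x)) (tgt x) L = (src x, cls (ds [:: x]), tgt x) :: L.
Proof.
move=> Hb; rewrite /norm ds1; case: ifP => // /andP[/eqP E /trivP T].
case: Hb; exists w, [:: x], [::], (src x); split => //.
- by rewrite cats1.
- by rewrite /= E !eqxx.
- by rewrite ds1; apply/cls_nil.
Qed.

Lemma act_nonempty w : w != [::] -> ~ bad w ->
  exists u q e rest, [/\ act w [::] = (u, cls (ds q), e) :: rest,
     exists r, w = r ++ q, q != [::] & pathfrom u q e].
Proof.
elim/last_ind: w => [//|w x IH] _ Hb.
rewrite /act foldl_rcons -/(act w [::]).
have single : forall L, (L = [::] \/ exists u c e rest, L = (u, c, e) :: rest /\ e != src x) ->
  exists u q e rest, [/\ step L x = (u, cls (ds q), e) :: rest,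
     exists r, rcons w x = r ++ q, q != [::] & pathfrom u q e].
  move=> L HL; exists (src x), [:: x], (tgt x), L; split.
  - rewrite /step /mulw; case: HL => [->|[u [c [e [rest [-> /negbTE ->]]]]]];
    exact: norm_letter Hb.
  - by exists w; rewrite cats1.
  - by [].
  - by rewrite /= !eqxx.
case: (w =P [::]) => [Ew|/eqP wn]; first by apply: single; left; rewrite Ew.
have [u [q [e [rest [E [r Er] qn Hq]]]]] := IH wn (fun h => Hb (bad_rcons x h)).
rewrite E; case: (e =P src x) => [Ee|Ne]; last first.
  by apply: single; right; exists u, (cls (ds q)), e, rest; split => //; apply/eqP.
rewrite /step /mulw Ee eqxx mulc_cls /norm.
case: ifP => [/andP[/eqP Eu /trivP T]|_].
  case: Hb; exists r, (rcons q x), [::], u; split.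
  - by rewrite cats0 Er -!cats1 catA.
  - by rewrite -cats1; case: (q) qn.
  - by rewrite -cats1; apply: (pathfrom_catI Hq); rewrite /= Ee Eu !eqxx.
  - by apply/cls_nil; rewrite -cats1 ds_cat ds1.
exists u, (rcons q x), (tgt x), rest; split.
- by rewrite -cats1 ds_cat ds1.
- by exists r; rewrite Er -!cats1 catA.
- by rewrite -cats1; case: (q) qn.
- by rewrite -cats1; apply: (pathfrom_catI Hq); rewrite /= Ee !eqxx.
Qed.

Lemma W_bad W : reducedb W -> W != [::] ->
  in_nclosure (fun _ => True) (in_SC C m S) W -> bad W.
Proof.
move=> _ Wn H; apply: NNPP => Hb.
have [u [q [e [rest [E _ _ _]]]]] := act_nonempty Wn Hb.
by rewrite act_W in E.
Qed.


Lemma vtx_v0 s i : vtx s i = v0 -> (s == 0) || (s == C).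
Proof. by rewrite /vtx; case: ifP => [H _|H [E _]] //; move: H; rewrite E. Qed.

Lemma vtx_inj s i s' i' : vtx s i != v0 -> vtx s i = vtx s' i' -> s = s' /\ i = i'.
Proof.
rewrite /vtx; case: ifP => H1; first by rewrite eqxx.
case: ifP => H2 _ E; first by case: E => E1 _; move: H1; rewrite E1.
by case: E => -> /val_inj ->.
Qed.

Lemma step_dir (j j' : 'I_C) (i i' : 'I_m) s s' :
  tgt ((j, i), s) = src ((j', i'), s') -> tgt ((j, i), s) != v0 ->
  ((j', i'), s') != inv_letter ((j, i), s) ->
  [/\ i' = i, s' = s & if s then val j' = j.+1 else val j = j'.+1].
Proof.
rewrite /tgt /src /inv_letter /=.
case: s; case: s' => /= E N Ny; case: (vtx_inj N E) => Ej Ei; subst i'.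
- by [].
- by case: Ej => /val_inj Ej; subst j'; rewrite eqxx in Ny.
- by move/val_inj: Ej => Ej; subst j'; rewrite eqxx in Ny.
- by [].
Qed.

Lemma walk p (j : 'I_C) (i : 'I_m) s a b :
  reducedb (((j, i), s) :: p) -> pathfrom a (((j, i), s) :: p) b ->
  (exists p1 p2, [/\ ((j, i), s) :: p = p1 ++ p2, p1 != [::], p2 != [::],
                    pathfrom a p1 v0 & pathfrom v0 p2 b])
  \/ (exists j' : 'I_C, b = tgt ((j', i), s) /\
          (if s then val j' = j + size p else val j = j' + size p)).
Proof.
elim: p j i s a => [|y p IH] j i s a.
  move=> _ /andP[_ /eqP <-]; right; exists j; split => //.
  by case: s; rewrite addn0.
set x := ((j, i), s) => Hr Hp.
have [Hy Hr'] : y != inv_letter x /\ reducedb (y :: p) by case/andP: Hr.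
have [Ha Hp'] : src x = a /\ pathfrom (tgt x) (y :: p) b by case/andP: Hp => /eqP.
case: (tgt x =P v0) => [E|/eqP N].
  left; exists [:: x], (y :: p); split => //; last by rewrite -E.
  by rewrite /= Ha E !eqxx.
clear Hr Hp; case: y Hy Hr' Hp' => [[jy iy] sy] Hy Hr' Hp'.
have [Hl|[j' [Eb Hj']]] := IH _ _ _ _ Hr' Hp'.
  left; case: Hl => p1 [p2 [E n1 n2 P1 P2]].
  exists (x :: p1), p2; split => //; first by rewrite E.
  by rewrite /= Ha eqxx P1.
have Ey : tgt x = src ((jy, iy), sy) by case/andP: Hp' => /eqP.
have [Ei Es Ej] := step_dir Ey N Hy.
subst iy sy; right; exists j'; split => //.
by move: Ej Hj'; case: (s) => /= Ej Hj'; lia.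
Qed.

Lemma closed_interior p a : reducedb p -> p != [::] -> pathfrom a p a -> a != v0 ->
  exists p1 p2, [/\ p = p1 ++ p2, pathfrom a p1 v0 & pathfrom v0 p2 a].
Proof.
case: p => [//|[[j i] s] p] Hr _ Hp Na.
have [[p1 [p2 [E _ _ P1 P2]]]|[j' [Eb Hj']]] := walk Hr Hp.
  by exists p1, p2.
have Ea : src ((j, i), s) = a by case/andP: Hp => /eqP.
clear Hr Hp; move: Ea Eb Na Hj'; rewrite /src /tgt; case: s => /= <- Eb Na Hj'.
  by have [E _] := vtx_inj Na Eb; lia.
by have [E _] := vtx_inj Na Eb; lia.
Qed.

Lemma size_closed_v0 n p : size p <= n -> reducedb p -> p != [::] -> pathfrom v0 p v0 -> C <= size p.
Proof.
elim: n p => [|n IH] [|[[j i] s] p] // Hs Hr _ Hp.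
have [[p1 [p2 [E n1 n2 P1 P2]]]|[j' [Eb Hj']]] := walk Hr Hp.
  have Hr1 : reducedb p1 by move: Hr; rewrite E => /reduced_cat [].
  have Hsz : size (((j, i), s) :: p) = size p1 + size p2 by rewrite E size_cat.
  have H2 : 0 < size p2 by rewrite lt0n size_eq0.
  have : C <= size p1 by apply: IH Hr1 n1 P1; rewrite Hsz in Hs; rewrite -ltnS; apply: leq_trans Hs; rewrite -addn1 leq_add2l.
  by rewrite Hsz => /leq_trans; apply; apply: leq_addr.
have Ea : src ((j, i), s) = v0 by case/andP: Hp => /eqP.
have jC := ltn_ord j; have jC' := ltn_ord j'.
clear Hs Hr Hp; move: Ea Eb Hj'; rewrite /src /tgt /=; case: s => /= /vtx_v0 H1 /esym/vtx_v0 H2 Hj'.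
  by move: H1 H2; lia.
by move: H1 H2; lia.
Qed.

Lemma core n p a : size p <= n -> reducedb p -> p != [::] -> pathfrom a p a -> Tr (ds p) ->
  exists q0 q q1 b, [/\ p = q0 ++ q ++ q1, q != [::], cyc_reduced q, pathfrom b q b & Tr (ds q)].
Proof.
elim: n p a => [|n IH] p a; first by case: p.
move=> Hs Hr Hn Hp Ht.
case: (boolP (cyc_reduced p)) => Hc.
  by exists [::], p, [::], a; split => //; rewrite cats0.
case: p Hs Hr Hn Hp Ht Hc => [//|x t] Hs Hr _ Hp Ht Hc.
have El : last x t = inv_letter x.
  by apply/eqP; move: Hc; rewrite /cyc_reduced Hr /= negbK.
case/lastP: t Hs Hr Hp Ht El {Hc} => [|t y] Hs Hr Hp Ht El.
  by move: El => /= /eqP; rewrite eq_sym inv_letter_neq.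
rewrite last_rcons in El; subst y.
have Ep : x :: rcons t (inv_letter x) = [:: x] ++ t ++ [:: inv_letter x] by rewrite cats1.
rewrite Ep in Hr Hp Ht Hs *.
have Hrt : reducedb t := reduced_infix Hr.
have Htn : t != [::].
  by apply/eqP => Et; move: Hr; rewrite Et /= eqxx.
have Hpt : pathfrom (tgt x) t (tgt x).
  case/andP: Hp => _ /pathfrom_catE [c [H1 H2]].
  by move: H2 => /= /andP[/eqP E _]; rewrite -E src_inv in H1.
have Htt : Tr (ds t).
  apply: (@Tr_conj' (dl x)); rewrite -dl_inv.
  by move: Ht; rewrite !ds_cat ds1 ds1.
have Hst : size t <= n by move: Hs; rewrite !size_cat /= add1n addn1 ltnS => /ltnW.
have [q0 [q [q1 [b [E1 E2 E3 E4 E5]]]]] := IH _ _ Hst Hrt Htn Hpt Htt.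
exists (x :: q0), q, (q1 ++ [:: inv_letter x]), b; split => //.
by rewrite E1 /= -!catA.
Qed.

Lemma main_sec (W : Wd) :
  W != [::] -> cyc_reduced W ->
  in_nclosure (fun _ => True) (in_SC C m S) W ->
  (exists k (V : Wd),
     [/\ V != [::], infix V (rot k W) &
         exists U : Wd,
           [/\ reducedb U, in_nclosure (inF C m) (in_SC C m S) U &
               exists k', V = rot k' U]])
  /\ (C <= size W)%N.
Proof.
move=> Wn Wc Hcl.
have WR : reducedb W by case/andP: Wc.
have [p0 [p [p1 [a [EW pn Pp Tp]]]]] := W_bad WR Wn Hcl.
have Hrp : reducedb p by rewrite EW in WR; apply: reduced_infix WR.
have [q0 [q [q1 [b [Eq qn Qc Qp Qt]]]]] := core (leqnn (size p)) Hrp pn Pp Tp.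
have Hrq : reducedb q by case/andP: Qc.
have [r1 [r2 [Er P1 P2]]] : exists r1 r2, [/\ q = r1 ++ r2, pathfrom b r1 v0 & pathfrom v0 r2 b].
  case: (b =P v0) => [Eb|/eqP Nb]; first by exists [::], q; split => //; rewrite ?Eb /= ?eqxx -?Eb.
  exact: closed_interior.
have PU : pathfrom v0 (r2 ++ r1) v0 := pathfrom_catI P2 P1.
have RU : reducedb (r2 ++ r1) by apply: cyc_rot; rewrite -Er.
have NU : Nset (r2 ++ r1).
  have := tele PU; rewrite tau_v0 cats0 /= => E.
  apply: (N_fe (esym E)); rewrite ds_cat; apply: Tr_rot.
  by rewrite -ds_cat -Er.
have Iq : infix q W.
  rewrite EW Eq; have -> : p0 ++ (q0 ++ q ++ q1) ++ p1 = (p0 ++ q0) ++ q ++ (q1 ++ p1) by rewrite !catA.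
  exact: infix_infix.
split.
  exists 0, q; split => //; first by rewrite rot0.
  exists (r2 ++ r1); split => //.
  by exists (size r2); rewrite rot_size_cat.
apply: leq_trans (size_infix Iq).
have -> : size q = size (r2 ++ r1) by rewrite Er !size_cat addnC.
apply: (size_closed_v0 (leqnn _)) => //.
by rewrite -size_eq0 size_cat addnC -size_cat -Er size_eq0.
Qed.

End Main.

Theorem lemma3p3 (m C : nat) (S : pred (seq 'I_m)) (W : word (YC C m)) :
  (1 <= C)%N ->
  ~~ S [::] ->
  W != [::] ->
  cyc_reduced W ->
  (* W represents the identity of Q_C = < Y_C | S_C > *)
  in_nclosure (fun _ => True) (in_SC C m S) W ->
  (exists k (V : word (YC C m)),
     [/\ V != [::], infix V (rot k W) &
         exists U : word (YC C m),
           [/\ reducedb U, in_nclosure (inF C m) (in_SC C m S) U &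
               exists k', V = rot k' U]])
  /\ (C <= size W)%N.
Proof.
move=> C1 _ Wn Wc H.
by apply: main_sec.
Qed.
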